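(* Let $m,k,n\ge1$ be integers; let $\lambda_i,\mu_i>0$ ($i\le k$), $\alpha_j,\beta_j,u_j,v_j>0$ ($j\le n$); let $\theta:\{0,\dots,m\}\to\mathbb{R}$ satisfy $0\le\theta\le1$, $\theta(b)>0$ for $b<m$, $\theta(m)=0$. Consider the CTMC on the set $\mathcal{S}$ of vectors $w=(x_1,\dots,x_k;a_1,\dots,a_n)$, $x_i\in\mathbb{Z}_{\ge0}$, $a_j\in\{I,W,T\}$, with $\mathrm{busy}(w)=\sum_i x_i+\sum_j1_{\{a_j=T\}}\le m$, whose only nonzero rates are: $x\to x+e_i$ at rate $\lambda_i\theta(\mathrm{busy}(w))$ and $x+e_i\to x$ at rate $(x_i+1)\mu_i$; and, for each $j$ changing only $a_j$: $I\to W$ at rate $\alpha_j$, $W\to I$ at rate $\beta_j$, $W\to T$ at rate $u_j\theta(\mathrm{busy}(w))$ ($w$ the current state), $T\to W$ at rate $v_j$. Its steady state distribution has the form $p(w)=B\big(\prod_{r=0}^{\mathrm{busy}(w)-1}\theta(r)\big)\big(\prod_{i}\rho_i^{x_i}/x_i!\big)\prod_j(\alpha_j/\beta_j)^{1_{\{a_j=W\}}}(\alpha_ju_j/(\beta_jv_j))^{1_{\{a_j=T\}}}$, $\rho_i=\lambda_i/\mu_i$, for a normalizing constant $B$. Let $\rho=\sum_i\rho_i$, $g=\min[n,m]$ and $\mathrm{i}=\sqrt{-1}$. Define $$C_t=\prod_{j=1}^n\Big[1+\frac{\alpha_j}{\beta_j}+e^{\frac{-2\pi \mathrm{i} t}{n+1}}\frac{\alpha_ju_j}{\beta_jv_j}\Big],\quad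 t\in\{0,\dots,n\},\qquad c_b=\frac{1}{n+1}\sum_{t=0}^nC_te^{\frac{2\pi \mathrm{i} tb}{n+1}},\quad b\in\{0,\dots,g\}.$$ Then $$B=\frac{1}{\sum_{b=0}^g\sum_{x=0}^{m-b}\frac{\rho^x}{x!}\big(\prod_{r=0}^{x+b-1}\theta(r)\big)c_b}.$$ Further, in the special case with no non-persistent users (i.e. $\rho\to0$), the normalizing constant is replaced by $$\tilde B=\frac{1}{\sum_{b=0}^g\big(\prod_{r=0}^{b-1}\theta(r)\big)c_b}.$$
   Context: Multi-channel access model with $m$ channels, $k$ classes of non-persistent users and $n$ persistent users with activity states Idle ($I$), Waiting ($W$), Transmitting ($T$). Empty products $\prod_{r=0}^{-1}\theta(r)$ equal $1$. In the case with no non-persistent users, the steady state probability of persistent configuration $a$ is $\tilde B\big(\prod_{r=0}^{\mathrm{busy}_p(a)-1}\theta(r)\big)\prod_j(\alpha_j/\beta_j)^{1_{\{a_j=W\}}}(\alpha_ju_j/(\beta_jv_j))^{1_{\{a_j=T\}}}$ with $\mathrm{busy}_p(a)=\sum_j1_{\{a_j=T\}}\le m$. *)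

(* Defs.v *)
From HB Require Import structures.
From mathcomp Require Import all_boot all_order all_algebra.
From mathcomp Require Import all_classical all_reals all_analysis.
From mathcomp Require Import complex.
Set Implicit Arguments. Unset Strict Implicit. Unset Printing Implicit Defensive.
Import Order.TTheory GRing.Theory Num.Theory.
Local Open Scope ring_scope.

Inductive activity := Idle | Waiting | Transmitting.

Definition activity_to_ord (s : activity) : 'I_3 :=
  match s with Idle => inord 0 | Waiting => inord 1 | Transmitting => inord 2 end.
Definition ord_to_activity (i : 'I_3) : activity :=
  match val i with 0 => Idle | 1 => Waiting | _ => Transmitting end.
Lemma activity_ordK : cancel activity_to_ord ord_to_activity.
Proof. by case; rewrite /ord_to_activity /= inordK. Qed.
HB.instance Definition _ := Finite.copy activity (can_type activity_ordK).

Section Model.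
Variable R : realType.

Definition theta_prod (theta : nat -> R) (b : nat) : R := \prod_(r < b) theta r.

Definition busy_p (n : nat) (a : {ffun 'I_n -> activity}) : nat :=
  \sum_(j < n) (a j == Transmitting : nat).

Definition busy (m k n : nat)
  (w : {ffun 'I_k -> 'I_m.+1} * {ffun 'I_n -> activity}) : nat :=
  \sum_(i < k) (w.1 i : nat) + busy_p w.2.

Definition pers_factor (n : nat) (alpha beta u v : 'I_n -> R)
  (a : {ffun 'I_n -> activity}) : R :=
  \prod_(j < n) match a j with
                | Idle => 1
                | Waiting => alpha j / beta j
                | Transmitting => alpha j * u j / (beta j * v j)
                end.

Definition weight (m k n : nat) (theta : nat -> R) (lam mu : 'I_k -> R)
  (alpha beta u v : 'I_n -> R)
  (w : {ffun 'I_k -> 'I_m.+1} * {ffun 'I_n -> activity}) : R :=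
  theta_prod theta (busy w)
  * (\prod_(i < k) ((lam i / mu i) ^+ w.1 i / (w.1 i)`!%:R))
  * pers_factor alpha beta u v w.2.

Definition weight_p (n : nat) (theta : nat -> R) (alpha beta u v : 'I_n -> R)
  (a : {ffun 'I_n -> activity}) : R :=
  theta_prod theta (busy_p a) * pers_factor alpha beta u v a.

Local Open Scope complex_scope.

Definition expi (x : R) : R[i] := cos x +i* sin x.

Definition Ct (n : nat) (alpha beta u v : 'I_n -> R) (t : nat) : R[i] :=
  \prod_(j < n) ((1 + alpha j / beta j)%:C
                 + expi (- (2 * pi * t%:R / n.+1%:R))
                   * (alpha j * u j / (beta j * v j))%:C).

Definition cb (n : nat) (alpha beta u v : 'I_n -> R) (b : nat) : R[i] :=
  (n.+1%:R)^-1 * \sum_(t < n.+1)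
     Ct alpha beta u v t * expi (2 * pi * t%:R * b%:R / n.+1%:R).

Definition denom (m k n : nat) (theta : nat -> R) (lam mu : 'I_k -> R)
  (alpha beta u v : 'I_n -> R) : R[i] :=
  let rho := \sum_(i < k) lam i / mu i in
  \sum_(b < (minn n m).+1) \sum_(x < (m - b).+1)
     ((rho ^+ x / x`!%:R * theta_prod theta (x + b))%:C
      * cb alpha beta u v b).

Definition denom_p (m n : nat) (theta : nat -> R)
  (alpha beta u v : 'I_n -> R) : R[i] :=
  \sum_(b < (minn n m).+1) ((theta_prod theta b)%:C * cb alpha beta u v b).

End Model.

(* Main.v *)
Require Import Defs.
From HB Require Import structures.
From mathcomp Require Import all_boot all_order all_algebra.
From mathcomp Require Import all_classical all_reals all_analysis.
From mathcomp Require Import complex.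
From mathcomp Require Import ring lra zify.
Import Order.TTheory GRing.Theory Num.Theory.
Local Open Scope ring_scope.

Local Open Scope complex_scope.
Section S.
Variable R : realType.
Lemma expiD (x y : R) : expi x * expi y = expi (x + y).
Proof. rewrite /expi cosD sinD /= ; simpl. apply/eqP; rewrite eq_complex /=; apply/andP; split; apply/eqP; ring. Qed.
Lemma expi0 : expi (0:R) = 1.
Proof. by rewrite /expi cos0 sin0. Qed.
Lemma expiX (x : R) k : expi x ^+ k = expi (k%:R * x).
Proof. elim: k => [|k IH]; first by rewrite mul0r expi0.
by rewrite exprS IH expiD mulrSr; congr expi; ring. Qed.
Lemma expi2pi k : expi (k%:R * (2 * pi)) = 1 :> R[i].
Proof. rewrite -expiX. have -> : expi (2 * pi) = 1 :> R[i].
  by rewrite /expi mulr_natl cos2pi sin2pi. by rewrite expr1n. Qed.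
Lemma expi_neq1 (x : R) : 0 < x < 2 * pi -> expi x != 1.
Proof.
move=> /andP[x0 x2]; rewrite /expi eq_complex /= negb_and; apply/orP.
have [xp|px] := ltP x pi.
  by right; rewrite gt_eqF // sin_gt0_pi // x0 xp.
move: px; rewrite le_eqVlt => /orP[/eqP <-|px].
  by left; rewrite cospi; apply/eqP => h; have : (-1 : R) < 1 by []; rewrite h ltxx.
right; have -> : x = (x - pi) + pi by ring.
rewrite sinDpi oppr_eq0 gt_eqF // sin_gt0_pi //. apply/andP; split; lra.
Qed.
End S.

Local Close Scope complex_scope.


Lemma group_sum (K : pzSemiRingType) (I : finType) (f : I -> nat) (M : nat)
  (Q : pred nat) (G : nat -> K) (P : I -> K) :
  (forall i, Q (f i) -> (f i < M.+1)%N) ->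
  \sum_(i | Q (f i)) G (f i) * P i
  = \sum_(b < M.+1 | Q b) G b * \sum_(i | f i == b) P i.
Proof.
move=> hf.
rewrite (partition_big (fun i => inord (f i) : 'I_M.+1) (fun b : 'I_M.+1 => Q b)) /=.
  apply: eq_bigr => b Qb; rewrite mulr_sumr; apply: eq_big => [i|i /andP[Qi /eqP <-]].
    case: (eqVneq (f i) b) => [e|ne].
      by rewrite e Qb /=; apply/eqP/val_inj; rewrite /= inordK // -e hf // e.
    case Qi: (Q (f i)) => //=; apply/negbTE; apply: contra ne => /eqP <-.
    by rewrite inordK // hf.
  by rewrite inordK // hf.
by move=> i Qi; rewrite inordK // hf.
Qed.

Lemma prodZX (K : comNzRingType) (I : finType) (c : I -> K) (e : I -> nat) :
  \prod_i (c i *: 'X^(e i)) = (\prod_i c i) *: 'X^(\sum_i e i) :> {poly K}.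
Proof.
under eq_bigr do rewrite -mul_polyC.
by rewrite big_split /= -rmorph_prod prodrXr mul_polyC.
Qed.

Section S.
Variable R : realType.

Definition Epoly (c : R) m : {poly R} := \sum_(x < m.+1) (c ^+ x / x`!%:R) *: 'X^x.

Lemma coef_E c m t : (t <= m)%N -> (Epoly c m)`_t = c ^+ t / t`!%:R.
Proof.
move=> tm; rewrite /Epoly coef_sum.
under eq_bigr do rewrite coefZ coefXn.
rewrite (bigD1 (Ordinal (tm : (t < m.+1)%N))) //= eqxx mulr1 big1 ?addr0 //.
move=> i ne; rewrite (_ : (t == i) = false) ?mulr0 //; apply/negbTE.
by apply: contra ne => /eqP e; apply/eqP/val_inj; rewrite /= e.
Qed.

Lemma fact_neq0 n : (n`!%:R : R) != 0.
Proof. by rewrite pnatr_eq0 -lt0n fact_gt0. Qed.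

Lemma binom_real (a c : R) s :
  \sum_(j < s.+1) a ^+ j / j`!%:R * (c ^+ (s - j) / (s - j)`!%:R)
  = (a + c) ^+ s / s`!%:R.
Proof.
rewrite addrC exprDn mulr_suml; apply: eq_bigr => j _.
have js : (j <= s)%N by rewrite -ltnS.
have hb := bin_fact js.
have -> : (s`!%:R : R) = 'C(s, j)%:R * (j`!%:R * (s - j)`!%:R) by rewrite -!natrM hb.
have h1 := fact_neq0 j. have h2 := fact_neq0 (s - j).
have h3 : ('C(s, j)%:R : R) != 0 by rewrite pnatr_eq0 -lt0n bin_gt0.
rewrite mulr_natr -mulr_natl. field. by rewrite h1 h2 h3.
Qed.

Lemma coef_prodE m k (rho : 'I_k -> R) s : (s <= m)%N ->
  (\prod_(i < k) Epoly (rho i) m)`_s = (\sum_i rho i) ^+ s / s`!%:R.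
Proof.
elim: k rho s => [|k IH] rho s sm.
  rewrite !big_ord0 coef1 expr0n; case: s sm => [|s] _ /=; first by rewrite divr1.
  by rewrite mul0r.
rewrite big_ord_recr big_ord_recr /= coefM.
rewrite -binom_real; apply: eq_bigr => j _.
have js : (j <= s)%N by rewrite -ltnS.
rewrite IH ?(leq_trans js) // coef_E //; exact: leq_trans (leq_subr _ _) sm.
Qed.

Lemma multinom m k (rho : 'I_k -> R) s : (s <= m)%N ->
  \sum_(x : {ffun 'I_k -> 'I_m.+1} | \sum_i (x i : nat) == s)
     \prod_i (rho i ^+ x i / (x i)`!%:R) = (\sum_i rho i) ^+ s / s`!%:R.
Proof.
move=> sm; rewrite -(@coef_prodE m k rho s sm) /Epoly.
rewrite (bigA_distr_bigA (fun i (x : 'I_m.+1) => (rho i ^+ x / x`!%:R) *: 'X^x)).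
rewrite coef_sum big_mkcond /=; apply: eq_bigr => x _.
rewrite prodZX coefZ coefXn eq_sym; case: eqP => _; by rewrite ?mulr1 ?mulr0.
Qed.

End S.

Local Open Scope complex_scope.
Set Implicit Arguments.

Lemma sum_activity (K : nmodType) (F : activity -> K) :
  \sum_(s : activity) F s = F Idle + F Waiting + F Transmitting.
Proof.
have n1 : Waiting != Idle by apply/negP => /eqP.
have n2 : Transmitting != Idle by apply/negP => /eqP.
have n3 : Transmitting != Waiting by apply/negP => /eqP.
rewrite (bigD1 Idle) // (bigD1 Waiting) ?n1 // (bigD1 Transmitting) ?n2 ?n3 //.
rewrite big1; last by case; rewrite eqxx ?andbF.
by rewrite /= addr0 addrA.
Qed.

Section P.
Variable R : realType.
Variables (n : nat) (alpha beta u v : 'I_n -> R).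

Definition Pc : {poly R[i]} :=
  \prod_(j < n) ((1 + alpha j / beta j)%:C%:P
                 + (alpha j * u j / (beta j * v j))%:C *: 'X).

Lemma coef_Pc b : Pc`_b = \sum_(a : {ffun 'I_n -> activity} | busy_p a == b)
                             (pers_factor alpha beta u v a)%:C.
Proof.
pose g j (s : activity) : R := match s with Idle => 1 | Waiting => alpha j / beta j
   | Transmitting => alpha j * u j / (beta j * v j) end.
have -> : Pc = \prod_(j < n) \sum_(s : activity) (g j s)%:C *: 'X^(s == Transmitting).
  have e1 : (Idle == Transmitting) = false by apply/negP => /eqP.
  have e2 : (Waiting == Transmitting) = false by apply/negP => /eqP.
  apply: eq_bigr => j _; rewrite sum_activity /= e1 e2 eqxx /= expr0 expr1 !alg_polyC.
  by rewrite -polyCD -rmorphD.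
rewrite bigA_distr_bigA coef_sum [RHS]big_mkcond /=.
apply: eq_bigr => a _.
rewrite prodZX coefZ coefXn -rmorph_prod /=.
have -> : \prod_i g i (a i) = pers_factor alpha beta u v a.
  by apply: eq_bigr => j _; case: (a j).
rewrite /busy_p eq_sym; case: eqP => _; by rewrite ?mulr1 ?mulr0.
Qed.

Lemma busy_p_le (a : {ffun 'I_n -> activity}) : (busy_p a <= n)%N.
Proof.
rewrite /busy_p -[n in (_ <= n)%N]card_ord -sum1_card.
by apply: leq_sum => j _; exact: leq_b1.
Qed.

Lemma size_Pc : (size Pc <= n.+1)%N.
Proof.
apply/leq_sizeP => j hj; rewrite coef_Pc big_pred0 // => a.
apply/negbTE; rewrite neq_ltn; apply/orP; left.
exact: leq_ltn_trans (busy_p_le a) hj.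
Qed.

Lemma Ct_horner t : Ct alpha beta u v t
   = Pc.[expi (- (2 * pi * t%:R / n.+1%:R))].
Proof.
rewrite /Ct /Pc horner_prod; apply: eq_bigr => j _.
rewrite hornerD hornerC hornerZ hornerX.
by rewrite [X in _ + X = _]mulrC.
Qed.

End P.
Arguments Pc {R n}.
Arguments coef_Pc {R n}.
Arguments size_Pc {R n}.
Arguments Ct_horner {R n}.

Unset Implicit Arguments.

Local Open Scope complex_scope.

Section D.
Variable R : realType.
Variable n : nat.

Definition om : R[i] := expi (2 * pi / n.+1%:R).

Lemma Nneq0 : (n.+1%:R : R) != 0.
Proof. by rewrite pnatr_eq0. Qed.

Lemma omN : om ^+ n.+1 = 1.
Proof.
rewrite /om expiX -[RHS](expi2pi R 1); congr expi.
have := Nneq0; move=> h; field; rewrite ?nat1r ?h //.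
Qed.

Lemma sum_roots e : \sum_(t < n.+1) (om ^+ e) ^+ t = if (n.+1 %| e)%N then n.+1%:R else 0.
Proof.
case: ifP => d.
  rewrite -(divnK d) mulnC exprM omN expr1n.
  under eq_bigr do rewrite expr1n.
  by rewrite sumr_const card_ord.
have zN : (om ^+ e) ^+ n.+1 = 1 by rewrite exprAC omN expr1n.
have z1 : om ^+ e != 1.
  rewrite {1}(divn_eq e n.+1) exprD mulnC exprM omN expr1n mul1r /om expiX.
  set r := (e %% n.+1)%N.
  have r0 : (0 < r)%N by rewrite lt0n; move: d; rewrite /dvdn => /negbT.
  have rN : (r < n.+1)%N by rewrite ltn_mod.
  apply: expi_neq1.
  have x0 : 0 < (r%:R : R) / n.+1%:R by rewrite divr_gt0 // ltr0n.
  have x1 : (r%:R : R) / n.+1%:R < 1 by rewrite ltr_pdivrMr ?ltr0n // mul1r ltr_nat.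
  have -> : (r%:R : R) * (2 * pi / n.+1%:R) = 2 * pi * (r%:R / n.+1%:R).
    have := Nneq0; move=> h; field; rewrite ?nat1r ?h //.
  have p0 := pi_gt0 R.
  have p2 : 0 < 2 * pi :> R by rewrite mulr_gt0.
  apply/andP; split; first by rewrite mulr_gt0.
  by rewrite -[X in _ < X]mulr1 ltr_pM2l.
have := subrX1 (om ^+ e) n.+1; rewrite zN subrr => /esym /eqP.
rewrite mulf_eq0 subr_eq0 (negbTE z1) /= => /eqP //.
Qed.

Lemma key (t b b' : nat) : (b' <= b + n.+1)%N ->
  expi (- (2 * pi * t%:R / n.+1%:R)) ^+ b' * expi (2 * pi * t%:R * b%:R / n.+1%:R)
  = (om ^+ (b + n.+1 - b')) ^+ t.
Proof.
move=> hb; rewrite -exprM /om !expiX expiD.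
rewrite -[LHS]mulr1 -(expi2pi R t) expiD; congr expi.
rewrite natrM natrB // natrD.
have := Nneq0; move=> h; field; rewrite ?nat1r ?h //.
Qed.

Lemma cb_coef (alpha beta u v : 'I_n -> R) b : (b <= n)%N ->
  cb alpha beta u v b = (Pc alpha beta u v)`_b.
Proof.
move=> bn; rewrite /cb.
under eq_bigr do rewrite Ct_horner (horner_coef_wide _ (size_Pc _ _ _ _)) mulr_suml.
rewrite exchange_big /=.
rewrite (eq_bigr (fun b' : 'I_n.+1 => (Pc alpha beta u v)`_b' *
   (if (n.+1 %| b + n.+1 - b')%N then n.+1%:R else 0))); last first.
  move=> b' _; rewrite -sum_roots mulr_sumr; apply: eq_bigr => t _.
  rewrite -(mulrA ((Pc alpha beta u v)`_b')) key //; exact: leq_trans (ltnW (ltn_ord b')) (leq_addl _ _).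
rewrite /= (bigD1 (Ordinal (bn : (b < n.+1)%N))) //= addKn dvdnn big1 ?addr0.
  by rewrite mulrCA mulVf ?mulr1 // pnatr_eq0.
move=> b' ne.
have -> : (n.+1 %| b + n.+1 - b')%N = false; last by rewrite mulr0.
have hb' := ltn_ord b'.
apply/negbTE; apply/negP => dv.
have h1 : (0 < b + n.+1 - b')%N by rewrite subn_gt0 (leq_trans hb') // leq_addl.
have h2 : (b + n.+1 - b' < 2 * n.+1)%N.
  by rewrite ltn_subLR ?(leq_trans (ltnW hb')) ?leq_addl //; lia.
have : (b + n.+1 - b')%N = n.+1.
  move: dv => /dvdnP[q hq]; move: h1 h2; rewrite hq.
  case: q {hq} => [|[|q]] //=; [by rewrite mul1n | by rewrite mulnC; lia].
move=> e; move/eqP: ne; apply; apply: val_inj => /=; lia.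
Qed.

End D.

Local Close Scope complex_scope.


Section M.
Variable R : realType.
Variables (m k n : nat) (lam mu : 'I_k -> R) (alpha beta u v : 'I_n -> R) (theta : nat -> R).

Let d b := \sum_(a : {ffun 'I_n -> activity} | busy_p a == b) pers_factor alpha beta u v a.

Lemma d_cb b : (b <= n)%N -> ((d b)%:C)%C = cb alpha beta u v b.
Proof. by move=> bn; rewrite cb_coef // coef_Pc rmorph_sum. Qed.

Lemma Tp : denom_p m theta alpha beta u v =
  ((\sum_(a : {ffun 'I_n -> activity} | (busy_p a <= m)%N)
        weight_p theta alpha beta u v a)%:C)%C.
Proof.
rewrite /weight_p (@group_sum _ _ (@busy_p n) n (fun b => (b <= m)%N) (theta_prod theta)
           (pers_factor alpha beta u v)); last by move=> a _; rewrite ltnS busy_p_le.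
rewrite rmorph_sum /denom_p (big_ord_widen n.+1 (fun b => ((theta_prod theta b)%:C * cb alpha beta u v b)%C)) ?ltnS ?geq_minl //=.
apply: eq_big => [b|b hb].
  by rewrite ltnS leq_min -ltnS ltn_ord.
rewrite rmorphM /= d_cb //; move: hb; rewrite ltnS leq_min => /andP[] //.
Qed.


Lemma T1 : denom m theta lam mu alpha beta u v =
  ((\sum_(w : {ffun 'I_k -> 'I_m.+1} * {ffun 'I_n -> activity} | (busy w <= m)%N)
        weight theta lam mu alpha beta u v w)%:C)%C.
Proof.
pose X := fun x : {ffun 'I_k -> 'I_m.+1} => \prod_(i<k) ((lam i / mu i) ^+ x i / (x i)`!%:R).
pose sx := fun x : {ffun 'I_k -> 'I_m.+1} => (\sum_(i<k) (x i : nat))%N.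
pose rho := \sum_(i < k) lam i / mu i.
have S1 : \sum_(w : {ffun 'I_k -> 'I_m.+1} * {ffun 'I_n -> activity} | (busy w <= m)%N)
        weight theta lam mu alpha beta u v w
   = \sum_x \sum_(b < n.+1) (if (sx x + b <= m)%N then theta_prod theta (sx x + b) * X x * d b else 0).
  transitivity (\sum_x \sum_(a | (sx x + busy_p a <= m)%N) weight theta lam mu alpha beta u v (x, a)).
    by rewrite pair_big_dep; apply: eq_big => [[x a]|[x a] _].
  apply: eq_bigr => x _.
  rewrite -big_mkcond.
  exact: (@group_sum _ _ (@busy_p n) n (fun b => (sx x + b <= m)%N)
     (fun b => theta_prod theta (sx x + b) * X x) (pers_factor alpha beta u v)
     (fun a _ => (busy_p_le a : (busy_p a < n.+1)%N))).
have S2 : \sum_(w : {ffun 'I_k -> 'I_m.+1} * {ffun 'I_n -> activity} | (busy w <= m)%N)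
        weight theta lam mu alpha beta u v w
   = \sum_(b < n.+1) \sum_(s < m.+1 | (s + b <= m)%N)
        theta_prod theta (s + b) * d b * (rho ^+ s / s`!%:R).
  rewrite S1 exchange_big; apply: eq_bigr => b _.
  rewrite -big_mkcond /=.
  transitivity (\sum_(x | (sx x + b <= m)%N) (theta_prod theta (sx x + b) * d b) * X x).
    by apply: eq_bigr => x _; rewrite mulrAC.
  rewrite (@group_sum _ _ sx m (fun s => (s + b <= m)%N)
     (fun s => theta_prod theta (s + b) * d b) X); last first.
    by move=> x h; rewrite ltnS (leq_trans (leq_addr b _) h).
  apply: eq_bigr => s hs; congr (_ * _).
  have sm : (s <= m)%N by rewrite -ltnS.
  by have := multinom R m k (fun i => lam i / mu i) s sm; rewrite /= => <-.
rewrite S2 rmorph_sum /denom /=.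
rewrite (big_ord_widen n.+1 (fun b => \sum_(x < (m - b).+1)
   ((rho ^+ x / x`!%:R * theta_prod theta (x + b))%:C * cb alpha beta u v b)%C)) ?ltnS ?geq_minl //.
rewrite [RHS](bigID (fun b : 'I_n.+1 => (b < (minn n m).+1)%N)) /=.
rewrite [X in _ = _ + X]big1 ?addr0.
  apply: eq_bigr => b hb.
  have bm : (b <= m)%N by move: hb; rewrite ltnS leq_min => /andP[].
  have bn : (b <= n)%N by rewrite -ltnS.
  rewrite (big_ord_widen m.+1 (fun s => ((rho ^+ s / s`!%:R * theta_prod theta (s + b))%:C
      * cb alpha beta u v b)%C)) ?ltnS ?leq_subr // rmorph_sum.
  apply: eq_big => [s|s _].
    by apply/idP/idP => /=; lia.
  rewrite -d_cb // -rmorphM; congr (_%:C)%C; rewrite /rho; ring.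
move=> b hb; rewrite rmorph_sum big_pred0 // => s.
have := ltn_ord b; move: hb; rewrite ltnS leq_min negb_and -!ltnNge.
by case/orP; lia.
Qed.

End M.

Theorem lemma1 (R : realType) (m k n : nat)
  (lam mu : 'I_k -> R) (alpha beta u v : 'I_n -> R) (theta : nat -> R) :
  (1 <= m)%N -> (1 <= k)%N -> (1 <= n)%N ->
  (forall i, 0 < lam i) -> (forall i, 0 < mu i) ->
  (forall j, 0 < alpha j) -> (forall j, 0 < beta j) ->
  (forall j, 0 < u j) -> (forall j, 0 < v j) ->
  (forall b, (b <= m)%N -> 0 <= theta b <= 1) ->
  (forall b, (b < m)%N -> 0 < theta b) ->
  theta m = 0 ->
  (forall B : R,
     \sum_(w : {ffun 'I_k -> 'I_m.+1} * {ffun 'I_n -> activity}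
             | (busy w <= m)%N)
        B * weight theta lam mu alpha beta u v w = 1 ->
     (B%:C)%C = (denom m theta lam mu alpha beta u v)^-1)
  /\
  (forall Bt : R,
     \sum_(a : {ffun 'I_n -> activity} | (busy_p a <= m)%N)
        Bt * weight_p theta alpha beta u v a = 1 ->
     (Bt%:C)%C = (denom_p m theta alpha beta u v)^-1).

Proof.
move=> _ _ _ _ _ _ _ _ _ _ _ _; split.
  move=> B; rewrite -mulr_sumr T1 => HW.
  move: HW; set W := \sum_(w | _) _ => HW.
  have W0 : W != 0 by apply: contra_eq_neq HW => ->; rewrite mulr0 eq_sym oner_neq0.
  rewrite -fmorphV; congr (_%:C)%C.
  by rewrite -[B]mulr1 -(mulfV W0) mulrA HW mul1r.
move=> B; rewrite -mulr_sumr Tp => HW.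
move: HW; set W := \sum_(a | _) _ => HW.
have W0 : W != 0 by apply: contra_eq_neq HW => ->; rewrite mulr0 eq_sym oner_neq0.
rewrite -fmorphV; congr (_%:C)%C.
by rewrite -[B]mulr1 -(mulfV W0) mulrA HW mul1r.
Qed.
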